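(* $18,19\notin\operatorname{Spec}(32_{65})$.
   Context: $32_{65}$ is the finite integral symmetric relation algebra with atoms $1'$, $a$, $b$, $c$, all symmetric, in which a diversity cycle $xyz$ (with $x,y,z\in\{a,b,c\}$) is mandatory (i.e. $x;y\ge z$) if it involves $a$ and forbidden (i.e. $x;y\cdot z=0$) otherwise. A representation over a set $U$ is an embedding into the full relation algebra on $U\times U$. $\operatorname{Spec}(A)$ is the set of cardinals $\alpha\le\omega$ such that $A$ has a representation over a set of cardinality $\alpha$. *)

(* Defs.v *)
From mathcomp Require Import all_boot.
Set Implicit Arguments. Unset Strict Implicit. Unset Printing Implicit Defensive.

(* Atoms are indexed by 'I_4 :  0 = 1' (identity), 1 = a, 2 = b, 3 = c.
   Elements of the algebra are the sets of atoms, {set 'I_4}. *)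
Definition at_id : 'I_4 := @Ordinal 4 0 isT.
Definition at_a  : 'I_4 := @Ordinal 4 1 isT.
Definition at_b  : 'I_4 := @Ordinal 4 2 isT.
Definition at_c  : 'I_4 := @Ordinal 4 3 isT.

Definition conv_atom (x : 'I_4) : 'I_4 := x.

(* cyc x y z  <->  x;y >= z  (consistency of the triple / cycle). *)
Definition cyc (x y z : 'I_4) : bool :=
  if x == at_id then z == y
  else if y == at_id then z == x
  else if z == at_id then y == conv_atom x
  else [|| x == at_a, y == at_a | z == at_a].

Definition ra_one : {set 'I_4} := [set at_id].
Definition ra_conv (X : {set 'I_4}) : {set 'I_4} := [set conv_atom x | x in X].
Definition ra_comp (X Y : {set 'I_4}) : {set 'I_4} :=
  [set z | [exists x in X, exists y in Y, cyc x y z]].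

Definition rel_comp (U : finType) (R S : {set U * U}) : {set U * U} :=
  [set p | [exists w, ((p.1, w) \in R) && ((w, p.2) \in S)]].
Definition rel_conv (U : finType) (R : {set U * U}) : {set U * U} :=
  [set p | (p.2, p.1) \in R].
Definition rel_id (U : finType) : {set U * U} := [set p | p.1 == p.2].

Definition representation (U : finType) (h : {set 'I_4} -> {set U * U}) : Prop :=
  injective h /\
  (forall X Y, h (X :|: Y) = h X :|: h Y) /\
  (forall X, h (~: X) = ~: h X) /\
  (forall X Y, h (ra_comp X Y) = rel_comp (h X) (h Y)) /\
  (forall X, h (ra_conv X) = rel_conv (h X)) /\
  h ra_one = rel_id U.

Definition in_spec (n : nat) : Prop :=
  exists (U : finType) (h : {set 'I_4} -> {set U * U}), #|U| = n /\ representation h.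

(* Main.v *)
Require Import Defs.
From mathcomp Require Import all_boot.
Set Implicit Arguments. Unset Strict Implicit. Unset Printing Implicit Defensive.

Definition Sbc : {set 'I_4} := [set at_b; at_c].

Ltac fin4 := apply/setP => -[[|[|[|[|k]]]] Hk] //; rewrite !inE //.

Lemma Sa_eq : [set at_a] = ~: (ra_one :|: Sbc). Proof. rewrite /ra_one /Sbc. fin4. Qed.
Lemma bc_disj : [set at_b] :&: [set at_c] = set0. Proof. fin4. Qed.
Lemma oneS_disj : ra_one :&: Sbc = set0. Proof. rewrite /ra_one /Sbc. fin4. Qed.
Lemma aS_disj : [set at_a] :&: Sbc = set0. Proof. rewrite /Sbc. fin4. Qed.
Lemma aone_disj : [set at_a] :&: ra_one = set0. Proof. rewrite /ra_one. fin4. Qed.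
Lemma bS : [set at_b] \subset Sbc. Proof. by rewrite sub1set !inE eqxx. Qed.
Lemma cS : [set at_c] \subset Sbc. Proof. by rewrite sub1set !inE eqxx orbT. Qed.
Lemma convS : ra_conv Sbc = Sbc. Proof. rewrite /ra_conv /conv_atom. exact: imset_id. Qed.
Lemma compSS z : z \in ra_comp Sbc Sbc -> z \notin Sbc.
Proof. rewrite inE => /existsP[x /andP[xS /existsP[y /andP[yS c]]]].
move: xS yS c; rewrite !inE => /orP[]/eqP-> /orP[]/eqP->; case: z => -[|[|[|[|k]]]] Hk //. Qed.
Lemma one_compSS : ra_one \subset ra_comp Sbc Sbc.
Proof. rewrite sub1set inE; apply/existsP; exists at_b; rewrite !inE eqxx /=.
apply/existsP; exists at_b; rewrite !inE eqxx. by []. Qed.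
Lemma a_comp (x y : 'I_4) : x \in Sbc -> y \in Sbc -> [set at_a] \subset ra_comp [set x] [set y].
Proof. move=> xS yS; rewrite sub1set inE; apply/existsP; exists x; rewrite !inE eqxx /=.
apply/existsP; exists y; rewrite !inE eqxx /=.
by move: xS yS; rewrite !inE => /orP[]/eqP-> /orP[]/eqP->. Qed.
Lemma S_compaa : Sbc \subset ra_comp [set at_a] [set at_a].
Proof. apply/subsetP => z; rewrite !inE => zS; apply/existsP; exists at_a; rewrite !inE eqxx /=.
apply/existsP; exists at_a; rewrite !inE eqxx /=.
by move: zS => /orP[]/eqP->. Qed.

Section Rep.
Variables (U : finType) (h : {set 'I_4} -> {set U * U}).
Hypothesis hr : representation h.

Let hU := proj1 (proj2 hr).
Let hC := proj1 (proj2 (proj2 hr)).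
Let hcomp := proj1 (proj2 (proj2 (proj2 hr))).
Let hconv := proj1 (proj2 (proj2 (proj2 (proj2 hr)))).
Let hone := proj2 (proj2 (proj2 (proj2 (proj2 hr)))).

Lemma hT : h setT = setT.
Proof. have := hU set0 (~: set0). rewrite set0U setC0 => ->.
by rewrite -setC0 hC setUCr. Qed.

Lemma h0 : h set0 = set0.
Proof. by rewrite -setCT hC hT setCT. Qed.

Lemma hI (X Y : {set 'I_4}) : h (X :&: Y) = h X :&: h Y.
Proof. by rewrite -[X :&: Y]setCK setCI hC hU !hC setCU !setCK. Qed.

Lemma hdisj (X Y : {set 'I_4}) (p : U * U) : X :&: Y = set0 -> p \in h X -> p \in h Y -> False.
Proof. move=> e pX pY. have : p \in h X :&: h Y by rewrite inE pX pY.
by rewrite -hI e h0 inE. Qed.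

Lemma hmono (X Y : {set 'I_4}) (p : U * U) : X \subset Y -> p \in h X -> p \in h Y.
Proof. move=> sXY; rewrite -(setUidPr sXY) hU inE => ->. by []. Qed.

Lemma hcompP (X Y : {set 'I_4}) (p : U * U) : p \in h (ra_comp X Y) -> exists w, (p.1, w) \in h X /\ (w, p.2) \in h Y.
Proof. rewrite hcomp inE => /existsP [w /andP[a b]]. by exists w. Qed.

Definition E (x y : U) := (x, y) \in h Sbc.
Definition N (x : U) := [set y | E x y].

Lemma E_irr x : ~ E x x.
Proof. move=> H. apply: (hdisj oneS_disj _ H). by rewrite hone inE. Qed.

Lemma E_sym x y : E x y -> E y x.
Proof. rewrite /E => H; rewrite -convS hconv inE /=. exact: H. Qed.

Lemma E_tri x y z : E x y -> E y z -> ~ E x z.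
Proof. move=> H1 H2 H3.
have : (x, z) \in h (ra_comp Sbc Sbc) by rewrite hcomp inE; apply/existsP; exists y; rewrite /= -/(E x y) -/(E y z) H1 H2.
rewrite -(setCK (ra_comp _ _)) hC inE => /negP; apply.
apply: hmono H3. apply/subsetP => t tS. rewrite inE. apply/negP => /compSS. by rewrite tS.
Qed.

Lemma E_nbr x : exists y, E x y.
Proof. have : (x, x) \in h (ra_comp Sbc Sbc) by apply: (hmono one_compSS); rewrite hone inE.
move/hcompP => [w [H _]]. by exists w. Qed.

Lemma E_edge u v : E u v -> exists w, [/\ w != u, ~ E u w, w != v & ~ E w v].
Proof. move=> H. have /hcompP [w [H1 H2]] := hmono S_compaa H. exists w; split.
- apply/eqP => e; subst w. apply: (hdisj aone_disj H1). by rewrite hone inE.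
- move=> H3. exact: (hdisj aS_disj H1 H3).
- apply/eqP => e; subst w. apply: (hdisj aone_disj H2). by rewrite hone inE.
- move=> H3. exact: (hdisj aS_disj H2 H3).
Qed.

Lemma E_a x y : x != y -> ~ E x y -> (x, y) \in h [set at_a].
Proof. move=> ne nE. rewrite Sa_eq hC hU !inE hone !inE /=. rewrite (negbTE ne) /=.
by apply/negP. Qed.

Lemma path2 x y (p q : 'I_4) : p \in Sbc -> q \in Sbc -> x != y -> ~ E x y ->
  exists w, (x, w) \in h [set p] /\ (w, y) \in h [set q].
Proof. move=> pS qS ne nE. have := hmono (a_comp pS qS) (E_a ne nE). by move/hcompP. Qed.

Lemma bS' p : p \in h [set at_b] -> p \in h Sbc. Proof. exact: hmono bS. Qed.
Lemma cS' p : p \in h [set at_c] -> p \in h Sbc. Proof. exact: hmono cS. Qed.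
Lemma bc' p : p \in h [set at_b] -> p \in h [set at_c] -> False. Proof. exact: hdisj bc_disj. Qed.

Lemma mu4 x y : x != y -> ~ E x y -> 4 <= #|N x :&: N y|.
Proof.
move=> ne nE.
have bb : at_b \in Sbc by rewrite !inE eqxx.
have cc : at_c \in Sbc by rewrite !inE eqxx orbT.
have [w1 [a1 b1]] := path2 bb bb ne nE.
have [w2 [a2 b2]] := path2 cc cc ne nE.
have [w3 [a3 b3]] := path2 bb cc ne nE.
have [w4 [a4 b4]] := path2 cc bb ne nE.
have d12 : w1 != w2 by apply/eqP => e; subst; exact: bc' a1 a2.
have d13 : w1 != w3 by apply/eqP => e; subst; exact: bc' b1 b3.
have d14 : w1 != w4 by apply/eqP => e; subst; exact: bc' a1 a4.
have d23 : w2 != w3 by apply/eqP => e; subst; exact: bc' a3 a2.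
have d24 : w2 != w4 by apply/eqP => e; subst; exact: bc' b4 b2.
have d34 : w3 != w4 by apply/eqP => e; subst; exact: bc' a3 a4.
have sub : [set w1; w2; w3; w4] \subset N x :&: N y.
  apply/subsetP => z; rewrite !inE => /orP[/orP[/orP[]|]|] /eqP ->; rewrite /E.
  - by apply/andP; split; [exact: bS' a1 | exact: E_sym (bS' b1)].
  - by apply/andP; split; [exact: cS' a2 | exact: E_sym (cS' b2)].
  - by apply/andP; split; [exact: bS' a3 | exact: E_sym (cS' b3)].
  - by apply/andP; split; [exact: cS' a4 | exact: E_sym (bS' b4)].
apply: leq_trans (subset_leq_card sub).
rewrite -setUA -setUA cardsU1 !inE (negbTE d12) (negbTE d13) (negbTE d14) /=.
rewrite cardsU1 !inE (negbTE d23) (negbTE d24) /= cards2 d34. by [].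
Qed.

Lemma card_disj (A B : {set U}) : A :&: B = set0 -> #|A| + #|B| = #|A :|: B|.
Proof. move=> e. by rewrite -cardsUI e cards0 addn0. Qed.

Lemma deg8 u v : E u v -> 8 <= #|N v|.
Proof.
move=> Euv. have [w [wu nuw wv nwv]] := E_edge Euv.
have Y4 := mu4 wv nwv.
have : 0 < #|N w :&: N u|.
  apply: leq_trans (mu4 wu (fun H => nuw (E_sym H))). by [].
move/card_gt0P => [x]; rewrite !inE => /andP[Ewx Eux].
have xv : x != v by apply/eqP => e; subst x; exact: nwv Ewx.
have nxv : ~ E x v by move=> H; exact: E_tri Eux H Euv.
have Z4 := mu4 xv nxv.
have disj : (N w :&: N v) :&: (N x :&: N v) = set0.
  apply/setP => y; rewrite !inE; apply/negP => /andP[/andP[Ewy _] /andP[Exy _]].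
  exact: E_tri Ewx Exy Ewy.
have := card_disj disj.
have sub : (N w :&: N v) :|: (N x :&: N v) \subset N v.
  by apply/subsetP => y; rewrite !inE => /orP[]/andP[_ ->].
move/(subset_leq_card) : sub => le e.
apply: leq_trans le. rewrite -e. exact: leq_add Y4 Z4.
Qed.


Lemma big_n (u : U) : 20 <= #|U|.
Proof.
have [v Euv] := E_nbr u.
have [w [wu nuw wv nwv]] := E_edge Euv.
have : 0 < #|N w :&: N u|.
  apply: leq_trans (mu4 wu (fun H => nuw (E_sym H))). by [].
move/card_gt0P => [x]; rewrite !inE => /andP[Ewx Eux].
have Y4 := mu4 wv nwv.
have du := deg8 (E_sym Euv).
have dx := deg8 Eux.
have d1 : N x :&: N u = set0.
  apply/setP => y; rewrite !inE; apply/negP => /andP[Exy Euy]. exact: E_tri Eux Exy Euy.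
have d2 : (N x :|: N u) :&: (N w :&: N v) = set0.
  apply/setP => y; rewrite !inE; apply/negP => /andP[/orP[Exy|Euy] /andP[Ewy Evy]].
  - exact: E_tri Ewx Exy Ewy.
  - exact: E_tri Euv Evy Euy.
have := card_disj d2. rewrite -(card_disj d1) => e.
have := max_card (mem ((N x :|: N u) :|: (N w :&: N v))).
rewrite -e. move=> le. apply: leq_trans le.
have : (8 + 8) + 4 <= #|N x| + #|N u| + #|N w :&: N v|.
  by apply: leq_add => //; apply: leq_add.
by [].
Qed.

End Rep.

Theorem mainTheorem12 : ~ in_spec 18 /\ ~ in_spec 19.
Proof.
have H n : n < 20 -> 0 < n -> ~ in_spec n.
  move=> lt pos [U [h [cU hr]]].
  move: pos; rewrite -cU => /card_gt0P [u _].
  have := big_n hr u. rewrite cU. by rewrite leqNgt lt.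
by split; apply: H.
Qed.
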